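(* An ideal $\mathcal I$ on $\mathbb N$ has the property of long intervals if and only if, for every increasing sequence $(n_k)$ of positive integers, there is an increasing sequence $(m_k)$ of positive integers such that $$\bigcup_{k\in\mathbb N}\{m_k,m_k+1,\ldots,m_k+n_k-1\} \in\mathcal I\quad\text{and}\quad m_k+n_k-1<m_{k+1}\ \text{ for all }k\in\mathbb N.$$
   Context: $\mathbb N=\{1,2,\dots\}$. An ideal on $\mathbb N$ is a family $\mathcal I\subset\mathcal P(\mathbb N)$ closed under finite unions and subsets, with $\mathbb N\notin\mathcal I$ and containing all finite subsets of $\mathbb N$. An ideal $\mathcal I$ on $\mathbb N$ has the property of long intervals (PLI) if there exists a sequence $(m(n))_{n\in\mathbb N}$ of positive integers such that $\bigcup_{n\in\mathbb N}\{m(n),m(n)+1,\ldots,m(n)+n-1\}\in\mathcal I$. *)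

(* Defs.v *)
(* Subsets of N = {1,2,...} are predicates on nat contained in
   the positive naturals; an ideal is a family of such predicates. *)
From Stdlib Require Import Arith.

Definition Npos : nat -> Prop := fun n => 1 <= n.

Definition subset (A B : nat -> Prop) : Prop := forall x, A x -> B x.

Definition finite_set (A : nat -> Prop) : Prop :=
  exists N, forall x, A x -> x < N.

Definition is_ideal (I : (nat -> Prop) -> Prop) : Prop :=
  (forall A, I A -> subset A Npos) /\
  (forall A B, I A -> I B -> I (fun x => A x \/ B x)) /\
  (forall A B, I A -> subset B A -> I B) /\
  ~ I Npos /\
  (forall A, subset A Npos -> finite_set A -> I A).

Definition PLI (I : (nat -> Prop) -> Prop) : Prop :=
  exists m : nat -> nat,
    (forall n, 1 <= n -> 1 <= m n) /\
    I (fun x => exists n, 1 <= n /\ m n <= x /\ x <= m n + n - 1).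

(* Main.v *)
Require Import Defs.
From Stdlib Require Import Arith Lia Classical ClassicalEpsilon.

Lemma unb (I : (nat -> Prop) -> Prop) (HI : is_ideal I) (m : nat -> nat)
  (Hm : forall n, 1 <= n -> 1 <= m n)
  (HA : I (fun x => exists n, 1 <= n /\ m n <= x /\ x <= m n + n - 1)) :
  forall B N, exists n, N <= n /\ 1 <= n /\ B < m n.
Proof.
  destruct HI as [H1 [H2 [H3 [H4 H5]]]].
  intros B N. apply NNPP; intro Hc.
  assert (Hb : forall n, N <= n -> 1 <= n -> m n <= B).
  { intros n a b. destruct (le_lt_dec (m n) B); auto. exfalso; apply Hc; exists n; auto. }
  apply H4.
  apply H3 with (A := fun x => (1 <= x /\ x < B) \/
     (exists n, 1 <= n /\ m n <= x /\ x <= m n + n - 1)).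
  - apply H2; auto. apply H5.
    + intros x [a _]; unfold Npos; auto.
    + exists B; intros x [_ a]; auto.
  - intros x Hx. unfold Npos in Hx. destruct (lt_dec x B).
    + left; auto.
    + right. exists (Nat.max N x + 1).
      assert (h1 := Hb (Nat.max N x + 1) ltac:(lia) ltac:(lia)).
      assert (h2 := Hm (Nat.max N x + 1) ltac:(lia)). lia.
Qed.

Theorem fact4p2 (I : (nat -> Prop) -> Prop) (HI : is_ideal I) :
  PLI I <->
  (forall nk : nat -> nat,
     (forall k, 1 <= nk k) -> (forall k, nk k < nk (S k)) ->
     exists mk : nat -> nat,
       (forall k, 1 <= mk k) /\ (forall k, mk k < mk (S k)) /\
       I (fun x => exists k, mk k <= x /\ x <= mk k + nk k - 1) /\
       (forall k, mk k + nk k - 1 < mk (S k))).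
Proof.
  split.
  - intros [m [Hm HA]] nk Hn1 Hninc.
    assert (Hu := unb I HI m Hm HA).
    assert (Hf : forall BN : nat * nat, {n | snd BN <= n /\ 1 <= n /\ fst BN < m n}).
    { intros [B N]. apply constructive_indefinite_description. apply Hu. }
    set (f := fun B N => proj1_sig (Hf (B, N))).
    assert (Hfs : forall B N, N <= f B N /\ 1 <= f B N /\ B < m (f B N)).
    { intros B N. unfold f. exact (proj2_sig (Hf (B, N))). }
    set (g := fix g k := match k with
                         | 0 => f 0 (nk 0)
                         | S k' => f (m (g k') + nk k') (nk (S k'))
                         end).
    assert (Hg : forall k, nk k <= g k /\ 1 <= g k /\ 1 <= m (g k)).
    { intros [|k]; simpl; [destruct (Hfs 0 (nk 0)) as (a&b&c)
        | destruct (Hfs (m (g k) + nk k) (nk (S k))) as (a&b&c)]; lia. }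
    assert (Hg2 : forall k, m (g k) + nk k < m (g (S k))).
    { intro k. simpl. destruct (Hfs (m (g k) + nk k) (nk (S k))) as (a&b&c). exact c. }
    exists (fun k => m (g k)). split; [|split; [|split]].
    + intro k; apply Hg.
    + intro k. specialize (Hg2 k). specialize (Hn1 k). lia.
    + destruct HI as [H1 [H2 [H3 [H4 H5]]]].
      apply H3 with (1 := HA). intros x [k [a b]].
      exists (g k). destruct (Hg k) as (c&d&e). repeat split; try lia.
    + intro k. specialize (Hg2 k). specialize (Hn1 k). lia.
  - intro H. destruct (H (fun k => S k)) as [mk [Hm1 [Hm2 [HI2 Hd]]]];
      [intros; lia | intros; lia |].
    exists (fun n => mk (n - 1)). split.
    + intros; apply Hm1.
    + destruct HI as [H1 [H2 [H3 [H4 H5]]]].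
      apply H3 with (1 := HI2). intros x [n [a [b c]]].
      exists (n - 1). replace (S (n - 1)) with n by lia. lia.
Qed.
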